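(* Let $A\in\mathbb{H}^{m\times n}$ have full row rank ($m\le n$), let $\alpha\in(0,2/\|A\|_2^2)$, $0<\gamma\le1$, set $X_0=\alpha A^H$ and $X_{k+1}=(1+\gamma)X_k-\gamma X_kAX_k$ for $k\ge0$ (equivalently $X_{k+1}=X_k-\gamma X_k(AX_k-I_m)$). Let $E_k=I_m-AX_k$, $H_k=X_kA$, $F_k=I_n-X_kA$, and define $g_\gamma(t)=(1-\gamma)t+\gamma t^2$, $h_\gamma(t)=(1+\gamma)t-\gamma t^2$. Then: (1) $E_{k+1}=g_\gamma(E_k)$; hence $\|E_k\|_2$ decreases monotonically to $0$ and $AX_k\to I_m$. (2) $H_{k+1}=h_\gamma(H_k)$; each $H_k$ is Hermitian with spectrum in $[0,2)$ and $H_k\to Q:=A^\dagger A$, the orthogonal projector onto $\mathcal{R}(A^H)$. Consequently $F_k\to I_n-Q$. (3) The sequence $(X_k)$ converges in operator norm to $A^\dagger$.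
   Context: $\mathbb{H}$ denotes the real quaternions; $X^H=\overline{X}^\top$ is the quaternionic conjugate transpose; a matrix is Hermitian if $X=X^H$ (such matrices have real spectrum). $\|\cdot\|_2$ is the operator norm induced by the Euclidean norm $\|x\|_2=\sqrt{\mathrm{Re}\,x^Hx}$. $A^\dagger$ is the Moore–Penrose pseudoinverse: the unique $A^\dagger\in\mathbb{H}^{n\times m}$ with $AA^\dagger A=A$, $A^\dagger AA^\dagger=A^\dagger$, $(AA^\dagger)^H=AA^\dagger$, $(A^\dagger A)^H=A^\dagger A$. All products are quaternionic matrix products in the written order. *)

(* Defs.v *)
From HB Require Import structures.
From mathcomp Require Import all_boot all_order all_algebra.
From mathcomp Require Import ring lra.
From mathcomp Require Import all_classical all_reals all_analysis.
Set Implicit Arguments. Unset Strict Implicit. Unset Printing Implicit Defensive.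
Import Order.TTheory GRing.Theory Num.Theory.
Local Open Scope ring_scope.

Section Quaternions.
Variable R : realType.

Record quat := Quat { q0 : R; q1 : R; q2 : R; q3 : R }.

Definition quat2t (q : quat) := (q0 q, q1 q, q2 q, q3 q).
Definition t2quat (t : R * R * R * R) := let: (a, b, c, d) := t in Quat a b c d.
Lemma quat2tK : cancel quat2t t2quat. Proof. by case. Qed.
HB.instance Definition _ := Choice.copy quat (can_type quat2tK).

Definition qzero := Quat 0 0 0 0.
Definition qadd p q := Quat (q0 p + q0 q) (q1 p + q1 q) (q2 p + q2 q) (q3 p + q3 q).
Definition qopp p := Quat (- q0 p) (- q1 p) (- q2 p) (- q3 p).

Lemma qaddA : associative qadd.
Proof. by case=> ? ? ? ?[]? ? ? ?[]? ? ? ?; rewrite /qadd /= !addrA. Qed.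
Lemma qaddC : commutative qadd.
Proof. by case=> ? ? ? ?[]? ? ? ?; rewrite /qadd /= [in LHS]addrC [X in Quat _ X]addrC [X in Quat _ _ X]addrC [X in Quat _ _ _ X]addrC. Qed.
Lemma qadd0 : left_id qzero qadd.
Proof. by case=> ? ? ? ?; rewrite /qadd /= !add0r. Qed.
Lemma qaddN : left_inverse qzero qopp qadd.
Proof. by case=> ? ? ? ?; rewrite /qadd /= !addNr. Qed.

HB.instance Definition _ := GRing.isZmodule.Build quat qaddA qaddC qadd0 qaddN.

Definition qone := Quat 1 0 0 0.
(* Hamilton product, i^2 = j^2 = k^2 = ijk = -1 *)
Definition qmul p q := Quat
  (q0 p * q0 q - q1 p * q1 q - q2 p * q2 q - q3 p * q3 q)
  (q0 p * q1 q + q1 p * q0 q + q2 p * q3 q - q3 p * q2 q)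
  (q0 p * q2 q - q1 p * q3 q + q2 p * q0 q + q3 p * q1 q)
  (q0 p * q3 q + q1 p * q2 q - q2 p * q1 q + q3 p * q0 q).

Lemma qmulA : associative qmul.
Proof. by case=> ? ? ? ?[]? ? ? ?[]? ? ? ?; rewrite /qmul /=; congr Quat; ring. Qed.
Lemma qmul1 : left_id qone qmul.
Proof. by case=> ? ? ? ?; rewrite /qmul /=; congr Quat; ring. Qed.
Lemma qmulr1 : right_id qone qmul.
Proof. by case=> ? ? ? ?; rewrite /qmul /=; congr Quat; ring. Qed.
Lemma qmulDl : left_distributive qmul qadd.
Proof. by case=> ? ? ? ?[]? ? ? ?[]? ? ? ?; rewrite /qmul /qadd /=; congr Quat; ring. Qed.
Lemma qmulDr : right_distributive qmul qadd.
Proof. by case=> ? ? ? ?[]? ? ? ?[]? ? ? ?; rewrite /qmul /qadd /=; congr Quat; ring. Qed.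
Lemma qone_neq0 : qone != 0.
Proof. apply/eqP=> [[]] /eqP; by rewrite oner_eq0. Qed.

HB.instance Definition _ :=
  GRing.Zmodule_isNzRing.Build quat qmulA qmul1 qmulr1 qmulDl qmulDr qone_neq0.

Definition qconj q := Quat (q0 q) (- q1 q) (- q2 q) (- q3 q).
Definition qreal (r : R) := Quat r 0 0 0.
Definition qnorm2 q := q0 q ^+ 2 + q1 q ^+ 2 + q2 q ^+ 2 + q3 q ^+ 2.

Definition qis_real q := [/\ q1 q = 0, q2 q = 0 & q3 q = 0].

Definition hconj m n (X : 'M[quat]_(m, n)) : 'M[quat]_(n, m) :=
  \matrix_(i, j) qconj (X j i).

Definition qhermitian n (X : 'M[quat]_n) := hconj X = X.

Definition vnorm n (x : 'cV[quat]_n) : R := Num.sqrt (\sum_i qnorm2 (x i 0)).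

Definition opnorm m n (X : 'M[quat]_(m, n)) : R :=
  sup [set vnorm (X *m x) | x in [set x : 'cV[quat]_n | vnorm x = 1]].

Definition full_row_rank m n (A : 'M[quat]_(m, n)) :=
  forall v : 'rV[quat]_m, v *m A = 0 -> v = 0.

Definition is_pinv m n (A : 'M[quat]_(m, n)) (B : 'M[quat]_(n, m)) :=
  [/\ A *m B *m A = A, B *m A *m B = B,
      hconj (A *m B) = A *m B & hconj (B *m A) = B *m A].

Definition right_eigenvalue n (X : 'M[quat]_n) (lam : quat) :=
  exists2 x : 'cV[quat]_n, x != 0 & X *m x = x *m (lam%:M : 'M[quat]_1).

Definition g_mx n (gam : R) (E : 'M[quat]_n) : 'M[quat]_n :=
  qreal (1 - gam) *: E + qreal gam *: (E *m E).
Definition h_mx n (gam : R) (H : 'M[quat]_n) : 'M[quat]_n :=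
  qreal (1 + gam) *: H - qreal gam *: (H *m H).

End Quaternions.

(* Main.v *)
Require Import Defs.
From HB Require Import structures.
From mathcomp Require Import all_boot all_order all_algebra.
From mathcomp Require Import all_classical all_reals all_analysis.
From mathcomp Require Import ring lra.
Import Order.TTheory GRing.Theory Num.Theory.
Import numFieldNormedType.Exports.
Local Open Scope classical_set_scope.
Local Open Scope ring_scope.

Set Implicit Arguments. Unset Strict Implicit. Unset Printing Implicit Defensive.

Lemma qaddE (R : realType) (p q : quat R) : p + q = Quat (q0 p + q0 q) (q1 p + q1 q) (q2 p + q2 q) (q3 p + q3 q).
Proof. by []. Qed.
Lemma qmulE (R : realType) (p q : quat R) : p * q = Quat
  (q0 p * q0 q - q1 p * q1 q - q2 p * q2 q - q3 p * q3 q)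
  (q0 p * q1 q + q1 p * q0 q + q2 p * q3 q - q3 p * q2 q)
  (q0 p * q2 q - q1 p * q3 q + q2 p * q0 q + q3 p * q1 q)
  (q0 p * q3 q + q1 p * q2 q - q2 p * q1 q + q3 p * q0 q).
Proof. by []. Qed.
Lemma qoppE (R : realType) (p : quat R) : - p = Quat (- q0 p) (- q1 p) (- q2 p) (- q3 p).
Proof. by []. Qed.
Lemma q0E (R : realType) : (0 : quat R) = Quat 0 0 0 0. Proof. by []. Qed.
Lemma q1E (R : realType) : (1 : quat R) = Quat 1 0 0 0. Proof. by []. Qed.

Ltac qsolve := rewrite ?qmulE ?qaddE ?qoppE ?q0E ?q1E /qconj /qreal /qnorm2 /=; congr Quat; ring.

Lemma qrealC (R : realType) (r : R) (p : quat R) : qreal r * p = p * qreal r.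
Proof. case: p => *; qsolve. Qed.
Lemma qrealD (R : realType) (r s : R) : qreal (r + s) = qreal r + qreal s.
Proof. qsolve. Qed.
Lemma qrealB (R : realType) (r s : R) : qreal (r - s) = qreal r - qreal s.
Proof. qsolve. Qed.
Lemma qrealM (R : realType) (r s : R) : qreal (r * s) = qreal r * qreal s.
Proof. qsolve. Qed.
Lemma qreal1 (R : realType) : qreal 1 = 1 :> quat R.
Proof. by []. Qed.
Lemma qreal0 (R : realType) : qreal 0 = 0 :> quat R.
Proof. by []. Qed.
Lemma qconjM (R : realType) (p q : quat R) : qconj (p * q) = qconj q * qconj p.
Proof. case: p => *; case: q => *; qsolve. Qed.
Lemma qconjD (R : realType) (p q : quat R) : qconj (p + q) = qconj p + qconj q.
Proof. case: p => *; case: q => *; qsolve. Qed.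
Lemma qconjN (R : realType) (p : quat R) : qconj (- p) = - qconj p.
Proof. case: p => *; qsolve. Qed.
Lemma qconjK (R : realType) (p : quat R) : qconj (qconj p) = p.
Proof. case: p => *; qsolve. Qed.
Lemma qconj0 (R : realType) : qconj 0 = 0 :> quat R.
Proof. qsolve. Qed.
Lemma qconj1 (R : realType) : qconj 1 = 1 :> quat R.
Proof. qsolve. Qed.
Lemma qconj_real (R : realType) (r : R) : qconj (qreal r) = qreal r.
Proof. qsolve. Qed.
Lemma qnorm2M (R : realType) (p q : quat R) : qnorm2 (p * q) = qnorm2 p * qnorm2 q.
Proof. case: p => *; case: q => *; rewrite /qnorm2 /=; ring. Qed.
Lemma qnorm2_ge0 (R : realType) (p : quat R) : 0 <= qnorm2 p.
Proof. rewrite /qnorm2; by rewrite !addr_ge0 // sqr_ge0. Qed.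
Lemma qnorm2_eq0 (R : realType) (p : quat R) : qnorm2 p = 0 -> p = 0.
Proof.
case: p => a b c d; rewrite /qnorm2 /= => h.
have ha : a ^+ 2 = 0 by apply/eqP; rewrite eq_le sqr_ge0 andbT; nra.
have hb : b ^+ 2 = 0 by apply/eqP; rewrite eq_le sqr_ge0 andbT; nra.
have hc : c ^+ 2 = 0 by apply/eqP; rewrite eq_le sqr_ge0 andbT; nra.
have hd : d ^+ 2 = 0 by apply/eqP; rewrite eq_le sqr_ge0 andbT; nra.
move/eqP: ha; move/eqP: hb; move/eqP: hc; move/eqP: hd.
by rewrite !sqrf_eq0 => /eqP-> /eqP-> /eqP-> /eqP->.
Qed.
Lemma qnorm2_real (R : realType) (r : R) : qnorm2 (qreal r) = r ^+ 2.
Proof. rewrite /qnorm2 /=; ring. Qed.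

Definition qip (R : realType) (p q : quat R) : R := q0 p * q0 q + q1 p * q1 q + q2 p * q2 q + q3 p * q3 q.
Lemma qipC (R : realType) (p q : quat R) : qip p q = qip q p.
Proof. rewrite /qip; ring. Qed.
Lemma qip_adj (R : realType) (b p q : quat R) : qip p (b * q) = qip (qconj b * p) q.
Proof. case: p => *; case: q => *; case: b => *; rewrite /qip /=; ring. Qed.
Lemma qipDr (R : realType) (p q r : quat R) : qip p (q + r) = qip p q + qip p r.
Proof. rewrite /qip /=; ring. Qed.
Lemma qipNr (R : realType) (p q : quat R) : qip p (- q) = - qip p q.
Proof. rewrite /qip /=; ring. Qed.
Lemma qip0r (R : realType) (p : quat R) : qip p 0 = 0.
Proof. rewrite /qip /=; ring. Qed.
Lemma qip_realr (R : realType) (p q : quat R) (r : R) : qip p (qreal r * q) = r * qip p q.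
Proof. rewrite /qip /=; ring. Qed.
Lemma qipp (R : realType) (p : quat R) : qip p p = qnorm2 p.
Proof. rewrite /qip /qnorm2; ring. Qed.
Lemma qnorm2_conj (R : realType) (p : quat R) : qnorm2 (qconj p) = qnorm2 p.
Proof. rewrite /qnorm2 /=; ring. Qed.

Set Implicit Arguments. Unset Strict Implicit. Unset Printing Implicit Defensive.

Lemma qconj_sum (R : realType) (I : finType) (F : I -> quat R) :
  qconj (\sum_i F i) = \sum_i qconj (F i).
Proof. exact: (big_morph _ (@qconjD R) (qconj0 R)). Qed.

Lemma hconjE (R : realType) m n (X : 'M[quat R]_(m, n)) i j : hconj X i j = qconj (X j i).
Proof. by rewrite /hconj mxE. Qed.

Lemma hconjM (R : realType) m n p (X : 'M[quat R]_(m, n)) (Y : 'M[quat R]_(n, p)) :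
  hconj (X *m Y) = hconj Y *m hconj X.
Proof.
apply/matrixP=> i j; rewrite hconjE !mxE qconj_sum; apply: eq_bigr => l _.
by rewrite qconjM !hconjE.
Qed.
Lemma hconjD (R : realType) m n (X Y : 'M[quat R]_(m, n)) : hconj (X + Y) = hconj X + hconj Y.
Proof. by apply/matrixP=> i j; rewrite !mxE qconjD. Qed.
Lemma hconjN (R : realType) m n (X : 'M[quat R]_(m, n)) : hconj (- X) = - hconj X.
Proof. by apply/matrixP=> i j; rewrite !mxE qconjN. Qed.
Lemma hconjB (R : realType) m n (X Y : 'M[quat R]_(m, n)) : hconj (X - Y) = hconj X - hconj Y.
Proof. by rewrite hconjD hconjN. Qed.
Lemma hconjK (R : realType) m n (X : 'M[quat R]_(m, n)) : hconj (hconj X) = X.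
Proof. by apply/matrixP=> i j; rewrite !mxE qconjK. Qed.
Lemma hconjZ (R : realType) m n (r : R) (X : 'M[quat R]_(m, n)) :
  hconj (qreal r *: X) = qreal r *: hconj X.
Proof. by apply/matrixP=> i j; rewrite !mxE qconjM qconj_real qrealC. Qed.
Lemma hconj1 (R : realType) n : hconj (1%:M : 'M[quat R]_n) = 1%:M.
Proof.
apply/matrixP=> i j; rewrite !mxE eq_sym.
by case: (i == j); rewrite /= ?qconj1 ?qconj0.
Qed.
Lemma hconj0 (R : realType) m n : hconj (0 : 'M[quat R]_(m, n)) = 0.
Proof. by apply/matrixP=> i j; rewrite !mxE qconj0. Qed.

Lemma mulmxZr (R : realType) m n p (r : R) (X : 'M[quat R]_(m, n)) (Y : 'M[quat R]_(n, p)) :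
  X *m (qreal r *: Y) = qreal r *: (X *m Y).
Proof.
apply/matrixP=> i j; rewrite !mxE mulr_sumr; apply: eq_bigr => l _.
by rewrite mxE mulrA -qrealC mulrA.
Qed.

Lemma scalerZZ (R : realType) m n (r s : R) (X : 'M[quat R]_(m, n)) :
  qreal r *: (qreal s *: X) = qreal (r * s) *: X.
Proof. by rewrite scalerA qrealM. Qed.

Definition vip (R : realType) n (x y : 'cV[quat R]_n) : R := \sum_i qip (x i 0) (y i 0).

Lemma vipC (R : realType) n (x y : 'cV[quat R]_n) : vip x y = vip y x.
Proof. by apply: eq_bigr => i _; rewrite qipC. Qed.
Lemma vipDr (R : realType) n (x y z : 'cV[quat R]_n) : vip x (y + z) = vip x y + vip x z.
Proof. by rewrite /vip -big_split; apply: eq_bigr => i _; rewrite mxE qipDr. Qed.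
Lemma vipNr (R : realType) n (x y : 'cV[quat R]_n) : vip x (- y) = - vip x y.
Proof. by rewrite /vip -sumrN; apply: eq_bigr => i _; rewrite mxE qipNr. Qed.
Lemma vipBr (R : realType) n (x y z : 'cV[quat R]_n) : vip x (y - z) = vip x y - vip x z.
Proof. by rewrite vipDr vipNr. Qed.
Lemma vipZr (R : realType) n (r : R) (x y : 'cV[quat R]_n) : vip x (qreal r *: y) = r * vip x y.
Proof. by rewrite /vip mulr_sumr; apply: eq_bigr => i _; rewrite mxE qip_realr. Qed.
Lemma vipDl (R : realType) n (x y z : 'cV[quat R]_n) : vip (y + z) x = vip y x + vip z x.
Proof. by rewrite vipC vipDr !(vipC x). Qed.
Lemma vipNl (R : realType) n (x y : 'cV[quat R]_n) : vip (- y) x = - vip y x.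
Proof. by rewrite vipC vipNr vipC. Qed.
Lemma vipBl (R : realType) n (x y z : 'cV[quat R]_n) : vip (y - z) x = vip y x - vip z x.
Proof. by rewrite vipDl vipNl. Qed.
Lemma vipZl (R : realType) n (r : R) (x y : 'cV[quat R]_n) : vip (qreal r *: y) x = r * vip y x.
Proof. by rewrite vipC vipZr vipC. Qed.

Lemma qip_sumr (R : realType) (I : finType) (p : quat R) (F : I -> quat R) :
  qip p (\sum_i F i) = \sum_i qip p (F i).
Proof. exact: (big_morph _ (@qipDr R p) (qip0r p)). Qed.

Lemma vip_adj (R : realType) m n (B : 'M[quat R]_(m, n)) (x : 'cV[quat R]_m) (y : 'cV[quat R]_n) :
  vip x (B *m y) = vip (hconj B *m x) y.
Proof.
rewrite /vip.
rewrite (eq_bigr (fun i => \sum_j qip (x i 0) (B i j * y j 0))); last first.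
  by move=> i _; rewrite mxE qip_sumr.
rewrite exchange_big /=; apply: eq_bigr => j _.
rewrite mxE qipC qip_sumr; apply: eq_bigr => i _.
by rewrite qip_adj qipC mxE.
Qed.

Lemma vip_ge0 (R : realType) n (x : 'cV[quat R]_n) : 0 <= vip x x.
Proof. by apply: sumr_ge0 => i _; rewrite qipp qnorm2_ge0. Qed.
Lemma vip_eq0 (R : realType) n (x : 'cV[quat R]_n) : vip x x = 0 -> x = 0.
Proof.
move=> h; apply/matrixP => i j; rewrite (ord1 j) mxE.
have := h; rewrite /vip (bigD1 i) //= => /eqP; rewrite paddr_eq0.
- by case/andP; rewrite qipp => /eqP /qnorm2_eq0.
- by rewrite qipp qnorm2_ge0.
- by apply: sumr_ge0 => l _; rewrite qipp qnorm2_ge0.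
Qed.

Lemma vnormE (R : realType) n (x : 'cV[quat R]_n) : vnorm x = Num.sqrt (vip x x).
Proof. by rewrite /vnorm /vip; congr Num.sqrt; apply: eq_bigr => i _; rewrite qipp. Qed.
Lemma vnorm_ge0 (R : realType) n (x : 'cV[quat R]_n) : 0 <= vnorm x.
Proof. by rewrite vnormE sqrtr_ge0. Qed.
Lemma vnorm_sq (R : realType) n (x : 'cV[quat R]_n) : vnorm x ^+ 2 = vip x x.
Proof. by rewrite vnormE sqr_sqrtr // vip_ge0. Qed.
Lemma vnorm_eq0 (R : realType) n (x : 'cV[quat R]_n) : vnorm x = 0 -> x = 0.
Proof. by move=> h; apply: vip_eq0; rewrite -vnorm_sq h expr0n. Qed.
Lemma vnorm0 (R : realType) n : vnorm (0 : 'cV[quat R]_n) = 0.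
Proof. by rewrite vnormE /vip big1 ?sqrtr0 // => i _; rewrite mxE /qip /=; ring. Qed.

Set Implicit Arguments. Unset Strict Implicit. Unset Printing Implicit Defensive.

Lemma vip_sq_ge0 (R : realType) n (x : 'cV[quat R]_n) : 0 <= vip x x.
Proof. exact: vip_ge0. Qed.

Lemma vnormZ (R : realType) n (r : R) (x : 'cV[quat R]_n) : vnorm (qreal r *: x) = `|r| * vnorm x.
Proof.
by rewrite !vnormE vipZl vipZr mulrA -expr2 sqrtrM ?sqr_ge0 // sqrtr_sqr.
Qed.

Lemma vnormN (R : realType) n (x : 'cV[quat R]_n) : vnorm (- x) = vnorm x.
Proof. by rewrite !vnormE vipNl vipNr opprK. Qed.

Lemma vip_CS (R : realType) n (x y : 'cV[quat R]_n) : vip x y <= vnorm x * vnorm y.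
Proof.
set a := vip y y; set b := vip x y.
have h0 : 0 <= vip (qreal a *: x - qreal b *: y) (qreal a *: x - qreal b *: y) by exact: vip_ge0.
rewrite vipBl !vipBr !vipZl !vipZr (vipC y x) -/b -/a in h0.
have ha : 0 <= a by exact: vip_ge0.
have hX : 0 <= vip x x by exact: vip_ge0.
have nx := vnorm_ge0 x; have ny := vnorm_ge0 y.
have ex := vnorm_sq x; have ey := vnorm_sq y.
case: (ltrgtP a 0) => [an|apos|a0]; first by move: ha; rewrite leNgt an.
2:{
  have y0 : y = 0 by apply: vip_eq0; rewrite -/a a0.
  rewrite /b y0 /vip big1 ?vnorm0 ?mulr0 // => i _; by rewrite mxE qipC /qip /=; ring. }
have hb : b ^+ 2 <= a * vip x x.
  have : 0 <= a * (a * vip x x - b ^+ 2).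
    by move: h0; congr (_ <= _); ring.
  by rewrite pmulr_rge0 // subr_ge0.
have : b ^+ 2 <= (vnorm x * vnorm y) ^+ 2 by rewrite exprMn ex ey mulrC.
have : 0 <= vnorm x * vnorm y by rewrite mulr_ge0.
move: (vnorm x * vnorm y) => p p0 h; nra.
Qed.

Lemma vnormD (R : realType) n (x y : 'cV[quat R]_n) : vnorm (x + y) <= vnorm x + vnorm y.
Proof.
have h := vip_CS x y.
have e : vnorm (x + y) ^+ 2 = vnorm x ^+ 2 + 2 * vip x y + vnorm y ^+ 2.
  by rewrite !vnorm_sq vipDl !vipDr (vipC y x); ring.
have := vnorm_ge0 (x + y); have := vnorm_ge0 x; have := vnorm_ge0 y.
nra.
Qed.

Lemma vnormB (R : realType) n (x y : 'cV[quat R]_n) : vnorm (x - y) <= vnorm x + vnorm y.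
Proof. by rewrite -(vnormN y) vnormD. Qed.

Lemma vnorm_sum (R : realType) n (I : finType) (F : I -> 'cV[quat R]_n) :
  vnorm (\sum_i F i) <= \sum_i vnorm (F i).
Proof.
apply: (big_ind2 (fun a b => vnorm a <= b)) => //.
- by rewrite vnorm0.
- move=> a1 b1 a2 b2 h1 h2; apply: le_trans (vnormD _ _) _; exact: lerD.
Qed.

Lemma vnorm_entry (R : realType) n (x : 'cV[quat R]_n) j :
  Num.sqrt (qnorm2 (x j 0)) <= vnorm x.
Proof.
rewrite /vnorm ler_sqrt; last by apply: sumr_ge0 => i _; exact: qnorm2_ge0.
rewrite (bigD1 j) //= lerDl; apply: sumr_ge0 => i _; exact: qnorm2_ge0.
Qed.

Lemma mx_bounded (R : realType) m n (X : 'M[quat R]_(m, n)) :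
  exists C, 0 <= C /\ forall x, vnorm (X *m x) <= C * vnorm x.
Proof.
pose c j := \sum_i qnorm2 (X i j).
exists (\sum_j Num.sqrt (c j)); split; first by apply: sumr_ge0 => *; exact: sqrtr_ge0.
move=> x.
pose v j : 'cV[quat R]_m := \col_i (X i j * x j 0).
have -> : X *m x = \sum_j v j.
  by apply/matrixP => i k; rewrite (ord1 k) !mxE summxE; apply: eq_bigr => j _; rewrite mxE.
apply: le_trans (vnorm_sum _) _.
rewrite mulr_suml; apply: ler_sum => j _.
have -> : vnorm (v j) = Num.sqrt (c j) * Num.sqrt (qnorm2 (x j 0)).
  rewrite /vnorm -sqrtrM; last by apply: sumr_ge0 => *; exact: qnorm2_ge0.
  by congr Num.sqrt; rewrite /c mulr_suml; apply: eq_bigr => i _; rewrite mxE qnorm2M.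
apply: ler_wpM2l; first exact: sqrtr_ge0.
exact: vnorm_entry.
Qed.

Definition opset (R : realType) m n (X : 'M[quat R]_(m, n)) :=
  [set vnorm (X *m x) | x in [set x : 'cV[quat R]_n | vnorm x = 1]].

Lemma opnormE (R : realType) m n (X : 'M[quat R]_(m, n)) : opnorm X = sup (opset X).
Proof. by []. Qed.

Lemma opset_has_sup (R : realType) m n (X : 'M[quat R]_(m, n)) :
  opset X !=set0 -> has_sup (opset X).
Proof.
move=> ne; split => //.
have [C [C0 hC]] := mx_bounded X.
exists C => y [x /= x1 <-]; by rewrite -[C]mulr1 -x1 hC.
Qed.

Lemma opnorm_ge0 (R : realType) m n (X : 'M[quat R]_(m, n)) : 0 <= opnorm X.
Proof.
rewrite opnormE; case: (pselect (opset X !=set0)) => [ne|e].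
- have [y Sy] := ne; apply: le_trans (sup_upper_bound (opset_has_sup ne) Sy).
  by case: Sy => x _ <-; exact: vnorm_ge0.
- have -> : opset X = set0.
    by apply/seteqP; split => y // Sy; exfalso; apply: e; exists y.
  by rewrite sup0.
Qed.

Lemma unit_scale (R : realType) n (x : 'cV[quat R]_n) :
  x != 0 -> vnorm (qreal (vnorm x)^-1 *: x) = 1.
Proof.
move=> nz; rewrite vnormZ.
have hpos : 0 < vnorm x.
  rewrite lt_def vnorm_ge0 andbT; apply/eqP => h; move/eqP: nz; apply; exact: vnorm_eq0.
by rewrite ger0_norm ?invr_ge0 ?vnorm_ge0 // mulVf // gt_eqF.
Qed.

Lemma opnorm_ub (R : realType) m n (X : 'M[quat R]_(m, n)) x :
  vnorm (X *m x) <= opnorm X * vnorm x.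
Proof.
have [->|nz] := eqVneq x 0; first by rewrite mulmx0 !vnorm0 mulr0.
have hpos : 0 < vnorm x.
  rewrite lt_def vnorm_ge0 andbT; apply/eqP => h; move/eqP: nz; apply; exact: vnorm_eq0.
set u := qreal (vnorm x)^-1 *: x.
have Su : opset X (vnorm (X *m u)) by exists u => //=; exact: unit_scale.
have := sup_upper_bound (opset_has_sup (ex_intro _ _ Su)) Su.
rewrite -opnormE /u mulmxZr vnormZ ger0_norm ?invr_ge0 ?vnorm_ge0 //.
by rewrite ler_pdivrMl // mulrC.
Qed.

Lemma opnorm_le (R : realType) m n (X : 'M[quat R]_(m, n)) (c : R) :
  0 <= c -> (forall x, vnorm (X *m x) <= c * vnorm x) -> opnorm X <= c.
Proof.
move=> c0 h; rewrite opnormE; case: (pselect (opset X !=set0)) => [ne|e].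
- apply: ge_sup => // y [x /= x1 <-]; by rewrite -[c]mulr1 -x1 h.
- have -> : opset X = set0.
    by apply/seteqP; split => y // Sy; exfalso; apply: e; exists y.
  by rewrite sup0.
Qed.

Lemma opnormM (R : realType) m n p (X : 'M[quat R]_(m, n)) (Y : 'M[quat R]_(n, p)) :
  opnorm (X *m Y) <= opnorm X * opnorm Y.
Proof.
apply: opnorm_le; first by rewrite mulr_ge0 ?opnorm_ge0.
move=> x; rewrite -mulmxA; apply: le_trans (opnorm_ub _ _) _.
rewrite -mulrA; apply: ler_wpM2l; [exact: opnorm_ge0 | exact: opnorm_ub].
Qed.

Lemma opnormD (R : realType) m n (X Y : 'M[quat R]_(m, n)) :
  opnorm (X + Y) <= opnorm X + opnorm Y.
Proof.
apply: opnorm_le; first by rewrite addr_ge0 ?opnorm_ge0.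
move=> x; rewrite mulmxDl mulrDl; apply: le_trans (vnormD _ _) _.
by apply: lerD; exact: opnorm_ub.
Qed.

Lemma opnormN (R : realType) m n (X : 'M[quat R]_(m, n)) : opnorm (- X) = opnorm X.
Proof.
apply/eqP; rewrite eq_le; apply/andP; split; apply: opnorm_le; rewrite ?opnorm_ge0 // => x.
- by rewrite mulNmx vnormN opnorm_ub.
- by rewrite -[X]opprK mulNmx vnormN opprK opnorm_ub.
Qed.

Lemma opnormZ (R : realType) m n (r : R) (X : 'M[quat R]_(m, n)) :
  opnorm (qreal r *: X) <= `|r| * opnorm X.
Proof.
apply: opnorm_le; first by rewrite mulr_ge0 ?opnorm_ge0.
move=> x; rewrite -scalemxAl vnormZ -mulrA; apply: ler_wpM2l => //; exact: opnorm_ub.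
Qed.

Set Implicit Arguments. Unset Strict Implicit. Unset Printing Implicit Defensive.

Ltac mxsolve := apply/matrixP => ? ?; rewrite !mxE;
  rewrite ?qmulE ?qaddE ?qoppE ?q0E ?q1E /qconj /qreal /=; congr Quat; ring.

Lemma mul_scalar_entry (R : realType) m n (Y : 'M[quat R]_(m, n)) (mu : quat R) i j :
  (Y *m mu%:M) i j = Y i j * mu.
Proof.
rewrite mxE (bigD1 j) //= mxE eqxx mulr1n big1 ?addr0 // => l /negbTE ne.
by rewrite mxE ne mulr0n mulr0.
Qed.

Lemma qreal_sum (R : realType) (I : finType) (F : I -> R) :
  qreal (\sum_i F i) = \sum_i qreal (F i).
Proof. exact: (big_morph _ (@qrealD R) (qreal0 R)). Qed.

Lemma qconj_mul_self (R : realType) (p : quat R) : qconj p * p = qreal (qnorm2 p).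
Proof. case: p => *; qsolve. Qed.

Lemma hconj_self (R : realType) n (x : 'cV[quat R]_n) : (hconj x *m x) 0 0 = qreal (vip x x).
Proof.
rewrite mxE /vip qreal_sum; apply: eq_bigr => i _.
by rewrite mxE qconj_mul_self qipp.
Qed.

Lemma nonzero_entry (R : realType) n (x : 'cV[quat R]_n) : x != 0 -> exists i, x i 0 != 0.
Proof.
move=> nz; case: (pselect (exists i, x i 0 != 0)) => // hn.
exfalso; move/eqP: nz; apply; apply/matrixP => i j; rewrite (ord1 j) mxE.
by apply/eqP; apply/negPn/negP => h; apply: hn; exists i.
Qed.

Lemma vip_pos (R : realType) n (x : 'cV[quat R]_n) : x != 0 -> 0 < vip x x.
Proof.
move=> nz; rewrite lt_def vip_ge0 andbT; apply/eqP => h.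
by move/eqP: nz; apply; apply: vip_eq0.
Qed.

Lemma herm_eig_real (R : realType) n (B : 'M[quat R]_n) (x : 'cV[quat R]_n) (mu : quat R) :
  hconj B = B -> x != 0 -> B *m x = x *m mu%:M -> qis_real mu.
Proof.
move=> hB nz hx.
set T := hconj x *m B *m x.
have hT : hconj T = T by rewrite /T !hconjM hconjK hB mulmxA.
have eT : T 0 0 = qreal (vip x x) * mu by rewrite /T -mulmxA hx mulmxA mul_scalar_entry hconj_self.
have : qconj (T 0 0) = T 0 0 by rewrite -hconjE hT.
rewrite eT; have N0 := vip_pos nz; move: (vip x x) N0 => N N0.
case: mu {hx eT} => a b c d /= e.
have e1 := congr1 (@q1 R) e; have e2 := congr1 (@q2 R) e; have e3 := congr1 (@q3 R) e.
move: e1 e2 e3; rewrite /= => e1 e2 e3.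
split => /=; nra.
Qed.

Lemma real_quat (R : realType) (mu : quat R) : qis_real mu -> mu = qreal (q0 mu).
Proof. by case: mu => a b c d [/= -> -> ->]. Qed.

Lemma mul_real_scalar (R : realType) m n (Y : 'M[quat R]_(m, n)) (r : R) :
  Y *m (qreal r)%:M = qreal r *: Y.
Proof. by apply/matrixP => i j; rewrite mul_scalar_entry mxE qrealC. Qed.

Lemma qmul_eq0 (R : realType) (p q : quat R) : p != 0 -> p * q = 0 -> q = 0.
Proof.
move=> nz h; apply: qnorm2_eq0.
have : qnorm2 (p * q) = 0 by rewrite h /qnorm2 /=; ring.
rewrite qnorm2M => /eqP; rewrite mulf_eq0 => /orP[/eqP hp|/eqP //].
by move/eqP: nz; case; apply: qnorm2_eq0.
Qed.

Lemma geo_squeeze (R : realType) (u : nat -> R) (C c : R) :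
  0 <= c < 1 -> (forall k, 0 <= u k <= C * c ^+ k) -> u @ \oo --> (0 : R).
Proof.
move=> /andP[c0 c1] hu.
apply: (@squeeze_cvgr _ _ _ _ (fun _ => 0) (geometric C c)).
- by near=> k; exact: hu.
- exact: cvg_cst.
- by apply: cvg_geometric; rewrite ger0_norm.
Unshelve. all: by end_near.
Qed.

Lemma full_rank_right_inv (R : realType) m n (A : 'M[quat R]_(m, n)) (Adag : 'M[quat R]_(n, m)) :
  full_row_rank A -> A *m Adag *m A = A -> A *m Adag = 1%:M.
Proof.
move=> fr h; apply/eqP; rewrite -subr_eq0; apply/eqP.
set D := A *m Adag - 1%:M.
have DA : D *m A = 0 by rewrite /D mulmxBl h mul1mx subrr.
apply/matrixP => i j.
have : row i D = 0 by apply: fr; rewrite -row_mul DA; apply/matrixP => a b; rewrite !mxE.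
by move/matrixP/(_ 0 j); rewrite !mxE.
Qed.

Set Implicit Arguments. Unset Strict Implicit. Unset Printing Implicit Defensive.

Lemma zmod_sub3 (V : zmodType) (a b c : V) : (a - b) - (a - c) = - (b - c).
Proof. by rewrite !opprB addrC addrA subrK. Qed.

Lemma sq_le (R : realType) (x y : R) : 0 <= x -> x <= y -> x ^+ 2 <= y ^+ 2.
Proof. move=> *; nra. Qed.
Lemma sq_le_inv (R : realType) (x y : R) : 0 <= y -> x ^+ 2 <= y ^+ 2 -> x <= y.
Proof. move=> *; nra. Qed.

Lemma aux_erec (R : realType) (x y e g p : R) :
  x <= (1 - g) * e -> y <= g * p -> g * p <= g * (e * e) -> x + y <= e * ((1 - g) + g * e).
Proof. move=> *; lra. Qed.
Lemma aux_c (R : realType) (g e : R) : g * e <= g * 1 -> 1 - g + g * e <= 1.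
Proof. move=> *; lra. Qed.
Lemma aux_c' (R : realType) (g e : R) : g * e < g * 1 -> 1 - g + g * e < 1.
Proof. move=> *; lra. Qed.

Lemma aux_add (R : realType) (x u v : R) : u <= v -> x + u <= x + v.
Proof. by rewrite lerD2l. Qed.

Opaque opnorm.

Lemma seq_bound (R : realType) (en : nat -> R) (g c0 : R) :
  0 < g -> g <= 1 -> 0 <= c0 -> c0 < 1 -> (forall k, 0 <= en k) -> en 0%N <= c0 ->
  (forall k, en k.+1 <= en k * ((1 - g) + g * en k)) ->
  exists c : R, [/\ 0 <= c, c < 1 &
    forall k, [/\ en k <= c0, en k <= en 0%N * c ^+ k & en k.+1 <= en k]].
Proof.
move=> g0 g1 c00 c01 e0 eb er.
exists (1 - g + g * c0).
have cge0 : 0 <= 1 - g + g * c0 by apply: addr_ge0; [rewrite subr_ge0 | exact: mulr_ge0 (ltW g0) c00].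
have clt1 : 1 - g + g * c0 < 1 by apply: aux_c'; rewrite ltr_pM2l.
split => //.
have main : forall k, en k <= c0 /\ en k <= en 0%N * (1 - g + g * c0) ^+ k.
  elim=> [|k [IH1 IH2]]; first by rewrite expr0 mulr1.
  have st : en k.+1 <= en k * (1 - g + g * c0).
    apply: le_trans (er k) _; apply: (ler_wpM2l (e0 k)); exact: aux_add (ler_wpM2l (ltW g0) IH1).
  split.
  - apply: le_trans st _; apply: le_trans IH1; exact: ler_piMr (e0 k) (ltW clt1).
  - apply: le_trans st _; apply: (le_trans (ler_wpM2r cge0 IH2)); by rewrite exprSr mulrA.
move=> k; have [h1 h2] := main k; split => //.
apply: le_trans (er k) _; apply: ler_piMr => //.
exact: aux_c (ler_wpM2l (ltW g0) (le_trans h1 (ltW c01))).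
Qed.

Lemma aux_eig (R : realType) (l : R) : - 1 < 1 - l < 1 -> 0 <= l < 2.
Proof. move=> /andP[h1 h2]; apply/andP; split; lra. Qed.

Theorem mainTheorem4 (R : realType) (m n : nat)
  (A : 'M[quat R]_(m, n)) (Adag : 'M[quat R]_(n, m))
  (alpha gam : R) (X : nat -> 'M[quat R]_(n, m)) :
  (m <= n)%N ->
  full_row_rank A ->
  is_pinv A Adag ->
  0 < alpha -> alpha < 2 / (opnorm A ^+ 2) ->
  0 < gam -> gam <= 1 ->
  X 0%N = qreal alpha *: hconj A ->
  (forall k : nat, X k.+1 = qreal (1 + gam) *: X k - qreal gam *: (X k *m A *m X k)) ->
  let E := fun k : nat => 1%:M - A *m X k in
  let H := fun k : nat => X k *m A in
  let F := fun k : nat => 1%:M - X k *m A in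
  let Q := Adag *m A in
  (* (1) *)
  ((forall k : nat, E k.+1 = g_mx gam (E k)) /\
   (forall k : nat, opnorm (E k.+1) <= opnorm (E k)) /\
   ((fun k : nat => opnorm (E k)) @ \oo --> (0 : R)) /\
   ((fun k : nat => opnorm (A *m X k - 1%:M)) @ \oo --> (0 : R))) /\
  (* (2) *)
  ((forall k : nat, H k.+1 = h_mx gam (H k)) /\
   (forall k : nat, qhermitian (H k)) /\
   (forall (k : nat) (lam : quat R), right_eigenvalue (H k) lam ->
      qis_real lam /\ 0 <= q0 lam < 2) /\
   ((fun k : nat => opnorm (H k - Q)) @ \oo --> (0 : R)) /\
   (Q *m Q = Q /\ qhermitian Q /\
    forall y : 'cV[quat R]_n,
      (exists z : 'cV[quat R]_m, y = hconj A *m z) <-> Q *m y = y) /\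
   ((fun k : nat => opnorm (F k - (1%:M - Q))) @ \oo --> (0 : R))) /\
  (* (3) *)
  ((fun k : nat => opnorm (X k - Adag)) @ \oo --> (0 : R)).
Proof.
move=> mn fr [p1 p2 p3 p4] a0 aA g0 g1 X0 XS E H F Q.
have AAd : A *m Adag = 1%:M := full_rank_right_inv fr p1.
have PAH : Adag *m A *m hconj A = hconj A by rewrite -{1}p4 -hconjM mulmxA p1.
have PX : forall k, Adag *m A *m X k = X k.
  elim=> [|k IH]; first by rewrite X0 mulmxZr PAH.
  by rewrite XS mulmxBr !mulmxZr !mulmxA IH.
have EX : forall k, X k - Adag = - (Adag *m E k).
  by move=> k; rewrite /E mulmxBr mulmx1 mulmxA PX opprB.
have Eg : forall k, E k.+1 = g_mx gam (E k).
  move=> k; rewrite /E /g_mx XS !mulmxBr !mulmxBl !mulmxZr ?mul1mx ?mulmx1 !mulmxA.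
  move: (A *m X k *m A *m X k) => PP; move: (A *m X k) => P; move: (1%:M : 'M[quat R]_m) => I.
  mxsolve.
have Hh : forall k, H k.+1 = h_mx gam (H k).
  by move=> k; rewrite /H /h_mx XS mulmxBl -!scalemxAl !mulmxA.
have Herm : forall k, qhermitian (H k).
  elim=> [|k IH]; rewrite /qhermitian.
  - by rewrite /H X0 -scalemxAl hconjZ hconjM hconjK.
  - by rewrite Hh /h_mx hconjB !hconjZ hconjM IH.

set a := opnorm A.
have a_ge0 : 0 <= a := opnorm_ge0 A.
have apos : 0 < a.
  rewrite lt_def a_ge0 andbT; apply/eqP => h; move: aA; rewrite /a in h; rewrite h expr0n /= invr0 mulr0.
  by move/(lt_trans a0); rewrite ltxx.
have aa2 : alpha * a ^+ 2 < 2 by rewrite -ltr_pdivlMr // exprn_gt0.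
set K := opnorm (hconj Adag).
have K0 : 0 <= K := opnorm_ge0 _.
set delta := alpha * (2 - alpha * a ^+ 2).
have d0 : 0 < delta by rewrite /delta mulr_gt0 // subr_gt0.
set t := delta / (K + 1) ^+ 2.
have K1 : 0 < (K + 1) ^+ 2 by rewrite exprn_gt0 // ltr_wpDl.
have t0 : 0 < t by rewrite /t divr_gt0.
have tK : t * (K + 1) ^+ 2 = delta by rewrite /t mulfVK // gt_eqF.
set c0 := Num.sqrt (Num.max 0 (1 - t)).
have c0ge0 : 0 <= c0 := sqrtr_ge0 _.
have c0sq : c0 ^+ 2 = Num.max 0 (1 - t) by rewrite sqr_sqrtr // le_max lexx.
have c0lt1 : c0 < 1.
  rewrite /c0 -[X in _ < X]sqrtr1 ltr_sqrt // gt_max; apply/andP; split; [exact: ltr01 | by rewrite gtrBl].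
have E0b : forall x, vnorm (E 0%N *m x) <= c0 * vnorm x.
  move=> x; set w := hconj A *m x.
  have xw : x = hconj Adag *m w by rewrite /w mulmxA -hconjM AAd hconj1 mul1mx.
  have hxK : vnorm x <= (K + 1) * vnorm w.
    rewrite {1}xw; apply: le_trans (opnorm_ub _ _) _.
    by apply: ler_wpM2r; [exact: vnorm_ge0 | rewrite lerDl].
  have hMw : vnorm (A *m w) <= a * vnorm w := opnorm_ub _ _.
  have ex : E 0%N *m x = x - qreal alpha *: (A *m w).
    by rewrite /E X0 mulmxBl mul1mx mulmxZr -scalemxAl -mulmxA.
  have eq : vnorm (E 0%N *m x) ^+ 2 = vnorm x ^+ 2 - 2 * alpha * vnorm w ^+ 2 + alpha ^+ 2 * vnorm (A *m w) ^+ 2.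
    rewrite ex !vnorm_sq vipBl !vipBr !vipZl !vipZr vip_adj (vipC (A *m w) x) vip_adj -/w.
    ring.
  have nw := vnorm_ge0 w; have nx := vnorm_ge0 x; have nAw := vnorm_ge0 (A *m w).
  have ne := vnorm_ge0 (E 0%N *m x).
  have h1 : vnorm (A *m w) ^+ 2 <= a ^+ 2 * vnorm w ^+ 2 by rewrite -exprMn; exact: sq_le.
  have h2 : vnorm x ^+ 2 <= (K + 1) ^+ 2 * vnorm w ^+ 2 by rewrite -exprMn; exact: sq_le.
  have h3 : vnorm (E 0%N *m x) ^+ 2 <= vnorm x ^+ 2 - delta * vnorm w ^+ 2.
    rewrite eq /delta.
    have : alpha ^+ 2 * vnorm (A *m w) ^+ 2 <= alpha ^+ 2 * (a ^+ 2 * vnorm w ^+ 2).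
      by rewrite ler_wpM2l // sqr_ge0.
    move=> hh; set V := vnorm (A *m w) ^+ 2 in hh *; lra.
  have h4 : t * vnorm x ^+ 2 <= delta * vnorm w ^+ 2.
    apply: le_trans (ler_wpM2l (ltW t0) h2) _; by rewrite mulrA tK.
  have h5 : vnorm (E 0%N *m x) ^+ 2 <= (c0 * vnorm x) ^+ 2.
    rewrite exprMn c0sq; apply: le_trans h3 _.
    have : (1 - t) <= Num.max 0 (1 - t) by rewrite le_max lexx orbT.
    move=> hm; have hx2 := sqr_ge0 (vnorm x).
    have := ler_wpM2r hx2 hm; lra.
  apply: sq_le_inv h5; by rewrite mulr_ge0.
have E0n : opnorm (E 0%N) <= c0 := opnorm_le c0ge0 E0b.
have Erec : forall k, opnorm (E k.+1) <= opnorm (E k) * ((1 - gam) + gam * opnorm (E k)).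
  move=> k; rewrite Eg /g_mx; apply: le_trans (opnormD _ _) _.
  have e1 := opnormZ (1 - gam) (E k).
  have e2 := opnormZ gam (E k *m E k).
  have e3 := opnormM (E k) (E k).
  have ek := opnorm_ge0 (E k).
  rewrite ger0_norm ?subr_ge0 // in e1; rewrite ger0_norm in e2; last exact: ltW g0.
  exact: aux_erec e1 e2 (ler_wpM2l (ltW g0) e3).
have [c [c_ge0 c_lt1 Eb]] := seq_bound g0 g1 c0ge0 c0lt1 (fun k => opnorm_ge0 (E k)) E0n Erec.
set e0 := opnorm (E 0%N).
have e0ge0 : 0 <= e0 := opnorm_ge0 _.
have conv : forall (u : nat -> R) (C : R), (forall k, 0 <= u k <= C * c ^+ k) -> u @ \oo --> (0 : R).
  by move=> u C; apply: geo_squeeze; rewrite c_ge0 c_lt1.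
have EB : forall k, 0 <= opnorm (E k) <= e0 * c ^+ k.
  by move=> k; have [_ h _] := Eb k; rewrite opnorm_ge0 h.
have XB : forall k, 0 <= opnorm (X k - Adag) <= opnorm Adag * e0 * c ^+ k.
  move=> k; rewrite opnorm_ge0 /= EX opnormN; apply: le_trans (opnormM _ _) _.
  rewrite -mulrA; apply: (ler_wpM2l (opnorm_ge0 _)); by have [_ h _] := Eb k.
have HQ : forall k, H k - Q = (X k - Adag) *m A by move=> k; rewrite /H /Q mulmxBl.
have HB : forall k, 0 <= opnorm (H k - Q) <= opnorm Adag * e0 * opnorm A * c ^+ k.
  move=> k; rewrite opnorm_ge0 /= HQ; apply: le_trans (opnormM _ _) _.
  rewrite mulrAC; apply: (ler_wpM2r (opnorm_ge0 _)); by have /andP[_ h] := XB k.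
split.
  split; first exact: Eg.
  split; first by move=> k; have [_ _ h] := Eb k.
  split; first exact: conv EB.
  apply: (conv _ e0) => k.
  by rewrite (_ : A *m X k - 1%:M = - E k) ?opnormN ?EB // /E opprB.
split; last exact: conv XB.
split; first exact: Hh.
split; first exact: Herm.
split.
  move=> k lam [x nz hx].
  have rl := herm_eig_real (Herm k) nz hx.
  split => //.
  move: hx; rewrite (real_quat rl) mul_real_scalar; move: (q0 lam) => l hx.
  have hx' : X k *m A *m x = qreal l *: x := hx.
  case: (eqVneq (A *m x) 0) => [Ax0|Ax].
    have : qreal l *: x = 0 by rewrite -hx' -mulmxA Ax0 mulmx0.
    have [i xi] := nonzero_entry nz.
    move/matrixP/(_ i 0); rewrite !mxE => h.
    have : qreal l = 0 by apply: (qmul_eq0 xi); rewrite -qrealC.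
    move/(congr1 (@q0 R)) => /= ->; by rewrite lexx ltr0n.
  set y := A *m x.
  have hy : E k *m y = qreal (1 - l) *: y.
    rewrite /E mulmxBl mul1mx /y -mulmxA (mulmxA (X k)) hx' mulmxZr qrealB qreal1 scalerBl scale1r.
    by [].
  have ny : 0 < vnorm y.
    rewrite lt_def vnorm_ge0 andbT; apply/eqP => h; move/eqP: Ax; apply; exact: vnorm_eq0.
  have hb := opnorm_ub (E k) y; rewrite hy vnormZ in hb.
  have [h1 _ _] := Eb k.
  have h2 : `|1 - l| * vnorm y < 1 * vnorm y.
    apply: le_lt_trans hb _; apply: le_lt_trans (ler_wpM2r (vnorm_ge0 y) h1) _.
    by rewrite ltr_pM2r.
  rewrite ltr_pM2r // ltr_norml in h2.
  exact: aux_eig.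
split; first exact: conv HB.
split.
  split; first by rewrite /Q mulmxA p2.
  split; first exact: p4.
  move=> y; split => [[z ->]|hy]; first by rewrite /Q mulmxA PAH.
  exists (hconj Adag *m y); rewrite mulmxA -hconjM p4; by rewrite /Q in hy; rewrite hy.
apply: (conv _ (opnorm Adag * e0 * opnorm A)) => k.
by rewrite (_ : F k - (1%:M - Q) = - (H k - Q)) ?opnormN ?HB // /F /H zmod_sub3.
Qed.
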